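(* If $x_R=\infty$, then $\alpha(\bar G)\le\alpha(\overline F)+1$ and $\beta(\bar G)\ge\beta(\overline F)+1$. If $x_R<\infty$, then $\alpha(\bar G(x_R-(\cdot)^{-1}))\le\alpha(\overline F(x_R-(\cdot)^{-1}))-1$ and $\beta(\bar G(x_R-(\cdot)^{-1}))\ge\beta(\overline F(x_R-(\cdot)^{-1}))-1$.
   Context: $F$ is a c.d.f. with $F(0)=0$, finite mean $\mathbb{E}[B]$, right endpoint $x_R=\sup\{x:F(x)<1\}\le\infty$; $\overline F=1-F$; $G(x)=\int_0^x\overline F(t)dt/\mathbb{E}[B]$, $\bar G=1-G$. For a function $\phi$, $\phi(x_R-(\cdot)^{-1})$ denotes $x\mapsto\phi(x_R-1/x)$. For positive $f$, the upper Matuszewska index $\alpha(f)$ is the infimum of those $\alpha$ for which there is $C$ such that for each $\Lambda>1$, $f(\mu x)/f(x)\le C(1+o(1))\mu^\alpha$ as $x\to\infty$ uniformly in $\mu\in[1,\Lambda]$; the lower index $\beta(f)$ is the supremum of those $\beta$ for which there is $D>0$ with $f(\mu x)/f(x)\ge D(1+o(1))\mu^\beta$ uniformly in $\mu\in[1,\Lambda]$. *)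

(* Defs.v *)
From HB Require Import structures.
From mathcomp Require Import all_boot all_order all_algebra.
From mathcomp Require Import all_classical all_reals all_analysis.
Set Implicit Arguments. Unset Strict Implicit. Unset Printing Implicit Defensive.
Import Order.TTheory GRing.Theory Num.Theory.
Import numFieldNormedType.Exports.
Local Open Scope classical_set_scope.
Local Open Scope ring_scope.

Section Defs.
Variable R : realType.

Definition is_cdf (F : R -> R) : Prop :=
  [/\ {homo F : x y / x <= y},
      (forall x, 0 <= F x <= 1),
      (forall x, F y @[y --> x^'+] --> F x),
      (F x @[x --> -oo] --> (0 : R)) &
      (F x @[x --> +oo] --> (1 : R))].

Definition tailF (F : R -> R) (x : R) : R := 1 - F x.

(* E[B] = \int_0^oo \bar F(t) dt  (tail formula, B >= 0 since F(0)=0) *)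
Definition meanE (F : R -> R) : \bar R :=
  (\int[lebesgue_measure]_(t in `[0%R, +oo[%classic) (tailF F t)%:E)%E.

Definition mean (F : R -> R) : R := fine (meanE F).

Definition Gcdf (F : R -> R) (x : R) : R :=
  fine (\int[lebesgue_measure]_(t in `[0%R, x]) (tailF F t)%:E)%E / mean F.

Definition tailG (F : R -> R) (x : R) : R := 1 - Gcdf F x.

Definition right_endpoint (F : R -> R) : \bar R :=
  ereal_sup [set x%:E | x in [set x : R | F x < 1]].

Definition near_endpoint (phi : R -> R) (xR : R) : R -> R :=
  fun x => phi (xR - x^-1).

(* exponents a for which: exists C, forall Lambda > 1,
   f(mu x)/f(x) <= C (1 + o(1)) mu^a as x -> oo uniformly in mu in [1,Lambda] *)
Definition upper_exps (f : R -> R) : set R :=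
  [set a | exists C : R, forall Lam : R, 1 < Lam ->
     forall eps : R, 0 < eps -> exists x0 : R, forall x mu : R,
       x0 <= x -> 1 <= mu <= Lam ->
       f (mu * x) / f x <= C * (1 + eps) * mu `^ a].

Definition lower_exps (f : R -> R) : set R :=
  [set b | exists D : R, 0 < D /\ forall Lam : R, 1 < Lam ->
     forall eps : R, 0 < eps -> exists x0 : R, forall x mu : R,
       x0 <= x -> 1 <= mu <= Lam ->
       D * (1 - eps) * mu `^ b <= f (mu * x) / f x].

Definition upper_index (f : R -> R) : \bar R :=
  ereal_inf [set a%:E | a in upper_exps f].

Definition lower_index (f : R -> R) : \bar R :=
  ereal_sup [set b%:E | b in lower_exps f].

End Defs.

(* Main.v *)
Set Warnings "-notation-overridden,-ambiguous-paths,-notation-incompatible-prefix".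
Require Import Defs.
From HB Require Import structures.
From mathcomp Require Import all_boot all_order all_algebra.
From mathcomp Require Import all_classical all_reals all_analysis.
From mathcomp Require Import ring lra.
From mathcomp Require Import measurable_realfun.
Import Order.TTheory GRing.Theory Num.Theory.
Import numFieldNormedType.Exports.
Local Open Scope classical_set_scope.
Local Open Scope ring_scope.
Section CV.
Context {R : realType}.
Local Notation mu := (@lebesgue_measure R).

Lemma affine_measurable (c k : R) : measurable_fun [set: R] (fun t : R => c + k * t).
Proof.
apply: measurable_realfun.measurable_funD => //; exact: measurable_funM.
Qed.

Section pf.
Variables (c : R) (k : {posnum R}).
Definition aff (t : measurableTypeR R) : measurableTypeR R := c + k%:num * t.
Let mg : @measurable_fun _ _ (measurableTypeR R) (measurableTypeR R) setT aff := affine_measurable c k%:num.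
Definition pf := pushforward mu aff.

Let pf0 : pf set0 = 0%E.
Proof. by rewrite /pf /pushforward preimage_set0 measure0. Qed.

Let pf_ge0 A : (0 <= pf A)%E.
Proof. exact: measure_ge0. Qed.

Let pf_sigma_additive : semi_sigma_additive pf.
Proof.
move=> F mF tF mUF; rewrite /pf /pushforward preimage_bigcup.
apply: measure_semi_sigma_additive.
- by move=> n; rewrite -[X in measurable X]setTI; exact: mg.
- apply/trivIsetP => /= i j _ _ ij; rewrite -preimage_setI.
  by move/trivIsetP : tF => /(_ _ _ _ _ ij) ->//; rewrite preimage_set0.
- by rewrite -preimage_bigcup -[X in measurable X]setTI; exact: mg.
Qed.

HB.instance Definition _ := isMeasure.Build _ _ _
  pf pf0 pf_ge0 pf_sigma_additive.

Lemma pf_affine (A : set R) : measurable A ->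
  pf A = (((k%:num)^-1)%:E * mu A)%E.
Proof.
move=> mA.
rewrite (@lebesgue_measure_unique R (mscale (k%:num)%:nng pf) _ A mA); last first.
  move=> X /ocitvP[->|[[a b]/= ab ->]]; first by rewrite !measure0.
  rewrite /mscale /pf /pushforward /=.
  rewrite [X in (_ * mu X)%E](_ : _ = `](a - c) / k%:num, (b - c) / k%:num]%classic); last first.
    apply/seteqP; split => x /=; rewrite !in_itv/= /aff.
      move=> /andP[h1 h2]; apply/andP; split.
        by rewrite ltr_pdivrMr // ltrBlDl mulrC.
      by rewrite ler_pdivlMr // lerBrDl mulrC.
    move=> /andP[h1 h2]; apply/andP; split.
      by move: h1; rewrite ltr_pdivrMr // ltrBlDl mulrC.
    by move: h2; rewrite ler_pdivlMr // lerBrDl mulrC.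
  rewrite !lebesgue_measure_itv /= !lte_fin ab.
  have -> : (a - c) / k%:num < (b - c) / k%:num.
    by rewrite ltr_pM2r ?invr_gt0 // ltrD2r.
  rewrite -!EFinD -EFinM; congr (_%:E).
  by field.
rewrite /mscale muleA -EFinM mulVf ?mul1e //.
Qed.

Lemma integral_aff (D : set R) (f : R -> \bar R) : measurable D ->
  measurable_fun [set: R] f -> (forall x, (0 <= f x)%E) ->
  (\int[mu]_(x in aff @^-1` D) f (aff x) =
   ((k%:num)^-1)%:E * \int[mu]_(x in D) f x)%E.
Proof.
move=> mD mf f0.
have -> : (\int[mu]_(x in aff @^-1` D) f (aff x) = \int[mu]_(x in aff @^-1` D) (f \o aff) x)%E by [].
rewrite -(ge0_integral_pushforward mg) //; last first.
  exact: measurable_funTS.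
have kinv0 : (0 <= (k%:num)^-1) by rewrite invr_ge0.
pose kinv : {nonneg R} := NngNum kinv0.
rewrite (eq_measure_integral (mscale kinv mu)); last first.
  by move=> A mA _; exact: (pf_affine A mA).
by rewrite ge0_integral_mscale //; exact: measurable_funTS.
Qed.
End pf.
End CV.
Section Transfer.
Context {R : realType}.
Implicit Types (phi psi : R -> R).
Lemma lemaxl (x y : R) : x <= Num.max x y. Proof. by rewrite le_max lexx. Qed.
Lemma lemaxr (x y : R) : y <= Num.max x y. Proof. by rewrite le_max lexx orbT. Qed.

Lemma upper_transfer phi psi (s : R) :
  (exists z, forall t, z <= t -> 0 < phi t) ->
  (exists z, forall t, z <= t -> 0 < psi t) ->
  (forall y0, exists y1, forall mu K, 1 <= mu -> 0 <= K ->
     (forall t, y0 <= t -> phi (mu * t) <= K * phi t) ->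
     forall y, y1 <= y -> psi (mu * y) <= K * mu `^ s * psi y) ->
  forall a, upper_exps phi a -> upper_exps psi (a + s).
Proof.
move=> [z hz] [z' hz'] T a [C HC].
have C0 : 0 <= C.
  have h12 : (1:R) < 2 by lra.
  have h12' : (1:R) <= 2 by lra.
  have [x0 Hx0] := HC 2 h12 1 ltr01.
  have := Hx0 (Num.max x0 z) 1 (lemaxl _ _) _.
  rewrite mul1r divff ?(gt_eqF (hz _ (lemaxr _ _))) // powR1 mulr1 lexx /=.
  move=> /(_ h12') H; lra.
exists C => Lam Lam1 eps eps0.
have [x0 Hx0] := HC Lam Lam1 eps eps0.
have [y1 Hy1] := T (Num.max x0 z).
exists (Num.max y1 z') => x mu hx /andP[mu1 muL].
move: hx; rewrite ge_max => /andP[hx1 hx2].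
have mu0 : 0 < mu by apply: (lt_le_trans ltr01 mu1).
have K0 : 0 <= C * (1 + eps) * mu `^ a.
  by rewrite !mulr_ge0 ?powR_ge0 //; lra.
have key := Hy1 mu _ mu1 K0 _ x hx1.
have psix := hz' x hx2.
rewrite ler_pdivrMr // powRD; last by apply/implyP => _; rewrite gt_eqF.
rewrite !mulrA; apply: key => t; rewrite ge_max => /andP[ht1 ht2].
have phit := hz t ht2.
have := Hx0 t mu ht1; rewrite mu1 muL => /(_ isT).
by rewrite ler_pdivrMr.
Qed.

Lemma lower_transfer phi psi (s : R) :
  (exists z, forall t, z <= t -> 0 < phi t) ->
  (exists z, forall t, z <= t -> 0 < psi t) ->
  (forall y0, exists y1, forall mu K, 1 <= mu -> 0 <= K ->
     (forall t, y0 <= t -> K * phi t <= phi (mu * t)) ->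
     forall y, y1 <= y -> K * mu `^ s * psi y <= psi (mu * y)) ->
  forall b, lower_exps phi b -> lower_exps psi (b + s).
Proof.
move=> [z hz] [z' hz'] T b [D [D0 HD]].
exists D; split => // Lam Lam1 eps eps0.
have [x0 Hx0] := HD Lam Lam1 eps eps0.
have [y1 Hy1] := T (Num.max x0 z).
exists (Num.max y1 (Num.max z' 0)) => x mu hx /andP[mu1 muL].
move: hx; rewrite !ge_max => /andP[hx1 /andP[hx2 hx3]].
have mu0 : 0 < mu by apply: (lt_le_trans ltr01 mu1).
have psix := hz' x hx2.
have psimx : 0 < psi (mu * x).
  apply: hz'; apply: (le_trans hx2); rewrite -{1}(mul1r x).
  by apply: ler_wpM2r.
rewrite ler_pdivlMr // powRD; last by apply/implyP => _; rewrite gt_eqF.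
have [K0|K0] := leP 0 (D * (1 - eps) * mu `^ b); last first.
  apply: (le_trans _ (ltW psimx)); rewrite !mulrA.
  apply: mulr_le0_ge0; last exact: ltW.
  by apply: mulr_le0_ge0; [exact: ltW|exact: powR_ge0].
have key := Hy1 mu _ mu1 K0 _ x hx1.
rewrite !mulrA; apply: key => t; rewrite ge_max => /andP[ht1 ht2].
have phit := hz t ht2.
have := Hx0 t mu ht1; rewrite mu1 muL => /(_ isT).
by rewrite ler_pdivlMr.
Qed.

Lemma upper_index_le phi psi (s : R) :
  (forall a, upper_exps phi a -> upper_exps psi (a + s)) ->
  (upper_index psi <= upper_index phi + s%:E)%E.
Proof.
move=> H; rewrite /upper_index -[X in (X <= _)%E](@subeK _ _ s%:E) //.
apply: leeD2r; apply/ereal_infP => _ [a Ua <-].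
rewrite -(@addeK _ s%:E a%:E) //; apply: leeD2r; rewrite -EFinD.
by apply: ereal_inf_lbound; exists (a + s) => //; exact: H.
Qed.

Lemma lower_index_ge phi psi (s : R) :
  (forall b, lower_exps phi b -> lower_exps psi (b + s)) ->
  (lower_index phi + s%:E <= lower_index psi)%E.
Proof.
move=> H; rewrite /lower_index -[X in (_ <= X)%E](@subeK _ _ s%:E) //.
apply: leeD2r; apply/ereal_supP => _ [b Lb <-].
rewrite -(@addeK _ s%:E b%:E) //; apply: leeD2r; rewrite -EFinD.
by apply: ereal_sup_ubound; exists (b + s) => //; exact: H.
Qed.
End Transfer.
Section Main.
Context {R : realType} (F : R -> R) (hF : is_cdf F) (F0 : F 0 = 0)
  (hm : (meanE F < +oo)%E).
Local Notation f := (tailF F).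
Local Notation mu := (@lebesgue_measure R).

Lemma F_nd : {homo F : x y / x <= y}. Proof. by case: hF. Qed.
Lemma F01 x : 0 <= F x <= 1. Proof. by case: hF. Qed.
Lemma f_ge0 t : 0 <= f t.
Proof. by have /andP[_ h] := F01 t; rewrite /tailF subr_ge0. Qed.
Lemma f_ni x y : x <= y -> f y <= f x.
Proof. by move=> xy; rewrite /tailF; apply: lerB => //; exact: F_nd. Qed.
Lemma mf : measurable_fun [set: R] f.
Proof. apply: nonincreasing_measurable => // x y; exact: f_ni. Qed.
Lemma mfE0 : measurable_fun [set: R] (fun t => (f t)%:E).
Proof. by apply/measurable_EFinP; exact: mf. Qed.
Lemma mfE : @measurable_fun _ _ (measurableTypeR R) _ [set: R] (fun t => (f t)%:E).
Proof. exact: mfE0. Qed.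
Lemma fE0 t : (0 <= (f t)%:E)%E. Proof. by rewrite lee_fin f_ge0. Qed.

Definition I x := (\int[mu]_(t in `]x, +oo[) (f t)%:E)%E.

Lemma I_ge0 x : (0 <= I x)%E.
Proof. by apply: integral_ge0 => t _; exact: fE0. Qed.

Lemma I_le_mean x : 0 <= x -> (I x <= meanE F)%E.
Proof.
move=> x0; apply: ge0_subset_integral => //.
- exact: measurable_funTS mfE.
- by move=> t _; exact: fE0.
- move=> t /=; rewrite !in_itv /= !andbT => xt; exact: le_trans (ltW xt).
Qed.

Lemma I_fin x : 0 <= x -> I x \is a fin_num.
Proof.
move=> x0; rewrite ge0_fin_numE ?I_ge0 //; exact: (le_lt_trans (I_le_mean _ x0) hm).
Qed.

Lemma mean_fin : meanE F \is a fin_num.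
Proof. by rewrite ge0_fin_numE // integral_ge0 // => t _; exact: fE0. Qed.

Lemma mean_split x : 0 <= x ->
  meanE F = (\int[mu]_(t in `[0%R, x]) (f t)%:E + I x)%E.
Proof.
move=> x0; rewrite /meanE /I -ge0_integral_setU //.
- congr (integral _ _ _); rewrite -itv_bndbnd_setU //.
- exact: measurable_funTS mfE.
- by move=> t _; exact: fE0.
- apply/disj_setPS => t [] /=; rewrite !in_itv /= => /andP[_ h1] /andP[h2 _].
  by move: (lt_le_trans h2 h1); rewrite ltxx.
Qed.


Lemma f_pos w : F w < 1 -> 0 < f w.
Proof. by rewrite /tailF subr_gt0. Qed.

Lemma I_pos x w : x < w -> F w < 1 -> (0 < I x)%E.
Proof.
move=> xw Fw.
have h : (\int[mu]_(t in `]x, w]) (cst (f w)%:E) t = ((f w) * (w - x))%:E)%E.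
  have hmu : mu `]x, w] = (w - x)%:E by rewrite lebesgue_measure_itv /= lte_fin xw -EFinD.
  rewrite integral_cst // EFinM; congr (_ * _)%E; exact: hmu.
apply: (@lt_le_trans _ _ ((f w) * (w - x))%:E).
  by rewrite lte_fin mulr_gt0 ?f_pos // subr_gt0.
rewrite -h; apply: (@le_trans _ _ (\int[mu]_(t in `]x, w]) (f t)%:E)%E).
  apply: ge0_le_integral => //.
  - by move=> t _; exact: fE0.
  - exact: measurable_funTS mfE.
  - move=> t; rewrite /= in_itv /= => /andP[_ tw]; by rewrite lee_fin f_ni.
apply: ge0_subset_integral => //.
- exact: measurable_funTS mfE.
- by move=> t _; exact: fE0.
- by move=> t /=; rewrite !in_itv /= andbT => /andP[].
Qed.

Lemma exists_w : exists w, 0 < w /\ F w < 1.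
Proof.
have [_ _ rc _ _] := hF.
have H : \forall t \near 0^'+, 0 < t /\ F t < 1.
  near=> t; split.
    near: t; exact: nbhs_right_gt.
  near: t; apply: (cvgr_lt (F 0) (rc 0)); rewrite F0; exact: ltr01.
by have [w ?] := filter_ex H; exists w.
Unshelve. all: by end_near.
Qed.

Lemma mean_pos : 0 < mean F.
Proof.
have [w [w0 Fw]] := exists_w.
rewrite /mean; have := I_pos _ _ w0 Fw; have := I_le_mean _ (lexx 0).
have := I_fin _ (lexx 0); have := mean_fin.
case: (meanE F) => // m _; case: (I 0) => // i _ /=.
rewrite !lee_fin !lte_fin => h1 h2; exact: lt_le_trans h2 h1.
Qed.

Lemma tailG_I x : 0 <= x -> tailG F x = fine (I x) / mean F.
Proof.
move=> x0; have mp := mean_pos.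
rewrite /tailG /Gcdf.
have Ef : mean F = fine (\int[mu]_(t in `[0%R, x]) (f t)%:E)%E + fine (I x).
  rewrite /mean (mean_split _ x0) fineD //; last exact: I_fin.
  have := mean_fin; rewrite (mean_split _ x0) fin_numD => /andP[] //.
move: mp; rewrite Ef; set a := fine _; set b := fine (I x) => mp.
by field; exact: lt0r_neq0.
Qed.


Lemma I_aff c k a : 0 < k ->
  I (c + k * a) = (k%:E * \int[mu]_(t in `]a, +oo[) (f (c + k * t))%:E)%E.
Proof.
move=> k0; pose kp := PosNum k0.
have := @integral_aff R c kp `]c + k * a, +oo[ (fun t => (f t)%:E) _ mfE0 fE0.
have -> : aff c kp @^-1` `]c + k * a, +oo[ = `]a, +oo[%classic.
  apply/seteqP; split => t; rewrite /= /aff /= !in_itv /= !andbT.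
    by rewrite ltrD2l ltr_pM2l.
  by rewrite ltrD2l ltr_pM2l.
move=> /(_ (measurable_itv _)) h.
rewrite /I; apply/esym; rewrite [X in (_ * X)%E](_ : _ = (\int[mu]_(x in `]a, +oo[) (f (aff c kp x))%:E)%E) //.
rewrite h muleA -EFinM divff ?mul1e //; exact: lt0r_neq0.
Qed.


Lemma mf_aff0 c k : measurable_fun [set: R] (fun t : R => (f (c + k * t))%:E).
Proof.
apply/measurable_EFinP.
exact: (measurableT_comp mf (affine_measurable c k)).
Qed.
Lemma mf_aff c k : @measurable_fun _ _ (measurableTypeR R) _ [set: R]
  (fun t : R => (f (c + k * t))%:E).
Proof. exact: mf_aff0. Qed.

Lemma I_cmp_le c k a K : 0 < k -> 0 <= K ->
  (forall t, a < t -> f (c + k * t) <= K * f t) ->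
  (I (c + k * a)%R <= (k * K)%:E * I a)%E.
Proof.
move=> k0 K0 H; rewrite I_aff // EFinM -muleA.
apply: lee_wpmul2l; first by rewrite lee_fin ltW.
rewrite /I -ge0_integralZl_EFin //; last first.
- exact: measurable_funTS mfE.
- by move=> t _; exact: fE0.

apply: ge0_le_integral => //.
- by move=> t _; exact: fE0.
- exact: measurable_funTS (mf_aff c k).
- by apply: measurable_funeM; exact: measurable_funTS mfE.
- by move=> t; rewrite /= in_itv /= andbT => at_; rewrite lee_fin H.
Qed.


Lemma I_cmp_ge c k a K : 0 < k -> 0 <= K ->
  (forall t, a < t -> K * f t <= f (c + k * t)) ->
  ((k * K)%:E * I a <= I (c + k * a)%R)%E.
Proof.
move=> k0 K0 H; rewrite I_aff // EFinM -muleA.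
apply: lee_wpmul2l; first by rewrite lee_fin ltW.
rewrite /I -ge0_integralZl_EFin //; last first.
- exact: measurable_funTS mfE.
- by move=> t _; exact: fE0.
apply: ge0_le_integral => //.
- by move=> t _; rewrite -EFinM lee_fin mulr_ge0 // f_ge0.
- by apply: measurable_funeM; exact: measurable_funTS mfE.
- exact: measurable_funTS (mf_aff c k).
- by move=> t; rewrite /= in_itv /= andbT => at_; rewrite -EFinM lee_fin H.
Qed.


Lemma G_cmp_le c k a K : 0 < k -> 0 <= K -> 0 <= a -> 0 <= c + k * a ->
  (forall t, a < t -> f (c + k * t) <= K * f t) ->
  tailG F (c + k * a) <= k * K * tailG F a.
Proof.
move=> k0 K0 a0 ca0 H.
have h := I_cmp_le c k a K k0 K0 H.
rewrite -(fineK (I_fin _ ca0)) -(fineK (I_fin _ a0)) -EFinM lee_fin in h.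
rewrite !tailG_I // mulrA; apply: ler_wpM2r => //.
by rewrite invr_ge0 ltW // mean_pos.
Qed.

Lemma G_cmp_ge c k a K : 0 < k -> 0 <= K -> 0 <= a -> 0 <= c + k * a ->
  (forall t, a < t -> K * f t <= f (c + k * t)) ->
  k * K * tailG F a <= tailG F (c + k * a).
Proof.
move=> k0 K0 a0 ca0 H.
have h := I_cmp_ge c k a K k0 K0 H.
rewrite -(fineK (I_fin _ ca0)) -(fineK (I_fin _ a0)) -EFinM lee_fin in h.
rewrite !tailG_I // mulrA; apply: ler_wpM2r => //.
by rewrite invr_ge0 ltW // mean_pos.
Qed.

Lemma G_pos x w : 0 <= x -> x < w -> F w < 1 -> 0 < tailG F x.
Proof.
move=> x0 xw Fw; rewrite tailG_I // divr_gt0 ?mean_pos //.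
apply: fine_gt0; rewrite (I_pos _ _ xw Fw) /= -ge0_fin_numE ?I_ge0 //; exact: I_fin.
Qed.


Lemma rep_le u : (forall y, F y < 1 -> y <= u) -> (right_endpoint F <= u%:E)%E.
Proof.
move=> H; apply/ereal_supP => _ [y Fy <-]; rewrite lee_fin; exact: H.
Qed.

Lemma rep_ex u : (u%:E < right_endpoint F)%E -> exists y, u < y /\ F y < 1.
Proof.
move=> hu; apply: contrapT => nH.
have : (right_endpoint F <= u%:E)%E.
  apply: rep_le => y Fy; rewrite leNgt; apply/negP => uy; apply: nH.
  by exists y.
by rewrite leNgt hu.
Qed.

Lemma rep_ub y : F y < 1 -> (y%:E <= right_endpoint F)%E.
Proof. by move=> Fy; apply: ereal_sup_ubound; exists y. Qed.

Lemma rep_fin1 xR : right_endpoint F = xR%:E -> forall u, xR < u -> F u = 1.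
Proof.
move=> E u xu; have /andP[_ F1] := F01 u.
apply/eqP; rewrite eq_le F1 /= leNgt; apply/negP => Fu.
by have := rep_ub _ Fu; rewrite E lee_fin leNgt xu.
Qed.

Lemma rep_fin2 xR : right_endpoint F = xR%:E -> F xR = 1.
Proof.
move=> E; have [_ _ rc _ _] := hF.
have h2 : F y @[y --> xR^'+] --> (1 : R).
  apply: cvg_near_cst; near=> y; apply: (rep_fin1 _ E).
  near: y; exact: nbhs_right_gt.
exact: (cvg_unique _ (rc xR) h2).
Unshelve. all: by end_near.
Qed.

Lemma rep_fin xR : right_endpoint F = xR%:E -> forall u, xR <= u -> f u = 0.
Proof.
move=> E u; rewrite le_eqVlt => /orP[/eqP <-|xu]; rewrite /tailF.
  by rewrite (rep_fin2 _ E) subrr.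
by rewrite (rep_fin1 _ E) // subrr.
Qed.


Lemma inf_case : right_endpoint F = +oo%E ->
  (upper_index (tailG F) <= upper_index (tailF F) + 1%:E)%E /\
  (lower_index (tailF F) + 1%:E <= lower_index (tailG F))%E.
Proof.
move=> E.
have exy t : exists y, t < y /\ F y < 1 by apply: rep_ex; rewrite E ltey.
have fpos t : 0 < f t.
  have [y [ty Fy]] := exy t.
  exact: (lt_le_trans (f_pos _ Fy) (f_ni _ _ (ltW ty))).
have ex_phi : exists z, forall t, z <= t -> 0 < f t by exists 0.
have ex_psi : exists z, forall t, z <= t -> 0 < tailG F t.
  exists 0 => t t0; have [y [ty Fy]] := exy t.
  exact: (G_pos _ _ t0 ty Fy).
split.
- apply: upper_index_le; apply: upper_transfer => //.
  move=> y0; exists (Num.max y0 0) => mu K mu1 K0 H y.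
  rewrite ge_max => /andP[y0y y0'].
  have mu0 : 0 < mu by apply: (lt_le_trans ltr01 mu1).
  rewrite (powRr1 (ltW mu0)) [K * mu]mulrC.
  have my0 : 0 <= 0 + mu * y by rewrite add0r mulr_ge0 // ltW.
  have Hp : forall t, y < t -> f (0 + mu * t) <= K * f t.
    by move=> t yt; rewrite add0r; apply: H; rewrite (le_trans y0y) // ltW.
  by have := G_cmp_le 0 mu y K mu0 K0 y0' my0 Hp; rewrite add0r.
- apply: lower_index_ge; apply: lower_transfer => //.
  move=> y0; exists (Num.max y0 0) => mu K mu1 K0 H y.
  rewrite ge_max => /andP[y0y y0'].
  have mu0 : 0 < mu by apply: (lt_le_trans ltr01 mu1).
  rewrite (powRr1 (ltW mu0)) [K * mu]mulrC.
  have my0 : 0 <= 0 + mu * y by rewrite add0r mulr_ge0 // ltW.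
  have Hp : forall t, y < t -> K * f t <= f (0 + mu * t).
    by move=> t yt; rewrite add0r; apply: H; rewrite (le_trans y0y) // ltW.
  by have := G_cmp_ge 0 mu y K mu0 K0 y0' my0 Hp; rewrite add0r.
Qed.


Lemma fin_case xR : right_endpoint F = xR%:E ->
  (upper_index (near_endpoint (tailG F) xR)
     <= upper_index (near_endpoint (tailF F) xR) - 1%:E)%E /\
  (lower_index (near_endpoint (tailF F) xR) - 1%:E
     <= lower_index (near_endpoint (tailG F) xR))%E.
Proof.
move=> E.
have xR0 : 0 < xR.
  have [w [w0 Fw]] := exists_w; have := rep_ub _ Fw; rewrite E lee_fin => h.
  exact: (lt_le_trans w0 h).
have exy u : u < xR -> exists y, u < y /\ F y < 1.
  by move=> ux; apply: rep_ex; rewrite E lte_fin.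
have fpos u : u < xR -> 0 < f u.
  move=> ux; have [y [uy Fy]] := exy u ux.
  exact: (lt_le_trans (f_pos _ Fy) (f_ni _ _ (ltW uy))).
have below t : 0 < t -> xR - t^-1 < xR.
  by move=> t0; rewrite ltrBlDr ltrDl invr_gt0.
have invle t : 0 < t -> xR^-1 <= t -> t^-1 <= xR.
  move=> t0 tx; rewrite -[X in _ <= X](invrK xR) lef_pV2 ?posrE ?invr_gt0 //.
have ex_phi : exists z, forall t, z <= t -> 0 < near_endpoint f xR t.
  exists 1 => t t1; rewrite /near_endpoint; apply: fpos; apply: below.
  exact: (lt_le_trans ltr01 t1).
have ex_psi : exists z, forall t, z <= t -> 0 < near_endpoint (tailG F) xR t.
  exists (Num.max 1 xR^-1) => t; rewrite ge_max => /andP[t1 tx].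
  have t0 : 0 < t by exact: (lt_le_trans ltr01 t1).
  have [y [ty Fy]] := exy _ (below t t0).
  apply: (G_pos _ _ _ ty Fy); rewrite subr_ge0; exact: invle.
have key y0 mu y t : 1 <= mu -> Num.max y0 (Num.max 1 xR^-1) <= y ->
    xR - y^-1 < t ->
    [/\ 0 < mu^-1, 0 <= xR - y^-1, 0 <= (xR - xR * mu^-1) + mu^-1 * (xR - y^-1),
        (xR - xR * mu^-1) + mu^-1 * (xR - y^-1) = xR - (mu * y)^-1 &
        (t < xR -> [/\ y0 <= (xR - t)^-1, xR - (mu * (xR - t)^-1)^-1 = (xR - xR * mu^-1) + mu^-1 * t
                     & xR - ((xR - t)^-1)^-1 = t])].
  move=> mu1; rewrite !ge_max => /andP[y0y /andP[y1 yx]] at_.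
  have mu0 : 0 < mu by exact: (lt_le_trans ltr01 mu1).
  have y0' : 0 < y by exact: (lt_le_trans ltr01 y1).
  have yinv := invle y y0' yx.
  have e : (xR - xR * mu^-1) + mu^-1 * (xR - y^-1) = xR - (mu * y)^-1.
    by field; rewrite ?gt_eqF //.
  split => //.
  - by rewrite invr_gt0.
  - by rewrite subr_ge0.
  - rewrite e subr_ge0; apply: le_trans yinv.
    rewrite lef_pV2 ?posrE ?mulr_gt0 //; exact: ler_peMl (ltW y0') mu1.
  - move=> tx; have d0 : 0 < xR - t by rewrite subr_gt0.
    split.
    + apply: (le_trans y0y); apply: ltW.
      rewrite -[X in X < _](invrK y) ltf_pV2 ?posrE ?invr_gt0 //; lra.
    + by field; rewrite ?gt_eqF //.
    + by rewrite invrK; ring.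
have y0of y0 y : Num.max y0 (Num.max 1 xR^-1) <= y -> 0 < y.
  by rewrite !ge_max => /andP[_ /andP[y1 _]]; exact: (lt_le_trans ltr01 y1).
have aff_ge t mu : 1 <= mu -> xR <= t -> xR <= (xR - xR * mu^-1) + mu^-1 * t.
  move=> mu1 xt; have mu0 : 0 < mu by exact: (lt_le_trans ltr01 mu1).
  have -> : xR - xR * mu^-1 + mu^-1 * t = xR + mu^-1 * (t - xR) by ring.
  by rewrite lerDl mulr_ge0 // ?subr_ge0 // invr_ge0 ltW.
split.
- rewrite -EFinN; apply: upper_index_le; apply: upper_transfer => //.
  move=> y0; exists (Num.max y0 (Num.max 1 xR^-1)) => mu K mu1 K0 H y hy.
  have mu0 : 0 < mu by exact: (lt_le_trans ltr01 mu1).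
  have y0' := y0of _ _ hy.
  rewrite /near_endpoint powRN (powRr1 (ltW mu0)).
  have Hp : forall t, xR - y^-1 < t ->
      f ((xR - xR * mu^-1) + mu^-1 * t) <= K * f t.
    move=> t at_; have [_ _ _ _ ht] := key y0 mu y t mu1 hy at_.
    have [tx|xt] := ltP t xR.
      have [s1 s2 s3] := ht tx; rewrite -s2.
      by have := H _ s1; rewrite /near_endpoint s3.
    have -> : f ((xR - xR * mu^-1) + mu^-1 * t) = 0.
      by apply: (rep_fin _ E); exact: aff_ge.
    by rewrite mulr_ge0 // f_ge0.
  have [k0 a0 ca0 e _] := key y0 mu y xR mu1 hy (below y y0').
  by have := G_cmp_le _ _ _ K k0 K0 a0 ca0 Hp; rewrite e [mu^-1 * K]mulrC.
- rewrite -EFinN; apply: lower_index_ge; apply: lower_transfer => //.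
  move=> y0; exists (Num.max y0 (Num.max 1 xR^-1)) => mu K mu1 K0 H y hy.
  have mu0 : 0 < mu by exact: (lt_le_trans ltr01 mu1).
  have y0' := y0of _ _ hy.
  rewrite /near_endpoint powRN (powRr1 (ltW mu0)).
  have Hp : forall t, xR - y^-1 < t ->
      K * f t <= f ((xR - xR * mu^-1) + mu^-1 * t).
    move=> t at_; have [_ _ _ _ ht] := key y0 mu y t mu1 hy at_.
    have [tx|xt] := ltP t xR.
      have [s1 s2 s3] := ht tx; rewrite -s2.
      by have := H _ s1; rewrite /near_endpoint s3.
    by rewrite (rep_fin _ E) // mulr0 f_ge0.
  have [k0 a0 ca0 e _] := key y0 mu y xR mu1 hy (below y y0').
  by have := G_cmp_ge _ _ _ K k0 K0 a0 ca0 Hp; rewrite e [mu^-1 * K]mulrC.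
Qed.

End Main.
Theorem lemma7 (R : realType) (F : R -> R) :
  is_cdf F -> F 0 = 0 -> (meanE F < +oo)%E ->
  (right_endpoint F = +oo%E ->
     (upper_index (tailG F) <= upper_index (tailF F) + 1%:E)%E /\
     (lower_index (tailF F) + 1%:E <= lower_index (tailG F))%E) /\
  (forall xR : R, right_endpoint F = xR%:E ->
     (upper_index (near_endpoint (tailG F) xR)
        <= upper_index (near_endpoint (tailF F) xR) - 1%:E)%E /\
     (lower_index (near_endpoint (tailF F) xR) - 1%:E
        <= lower_index (near_endpoint (tailG F) xR))%E).
Proof.
move=> hF F0 hm; split => [E|xR E].
  by apply: inf_case.
by apply: fin_case.
Qed.
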